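(* Let $A\in M_n(\mathbb{C})$ be a generalized row stochastic matrix with constant row sum $c\in\mathbb{C}$, i.e. $\sum_{j=1}^n A_{ij}=c$ for all $i=1,\dots,n$, and let $\sigma=\|A\|_2$. Then: (1) $|c|\le\sigma$. (2) If $|c|=\sigma$, then $A$ also has constant column sum $c$, i.e. $\sum_{i=1}^n A_{ij}=c$ for all $j=1,\dots,n$ (so $A$ is a $c$-generalized doubly stochastic matrix). (3) If $|c|=\sigma$, then $\mu_{\mathbb{B}}(A^m)=\sigma^m$ for every $m\in\mathbb{N}$ and every block structure $\mathbb{B}\subseteq M_n(\mathbb{C})$.
   Context: $\|M\|_2$ denotes the spectral norm (largest singular value) of $M\in M_n(\mathbb{C})$. A block structure is a set of the form $\mathbb{B}=\{\operatorname{diag}(\delta_1I_{k_1},\dots,\delta_rI_{k_r},\Delta_1,\dots,\Delta_s)\mid \delta_i\in\mathbb{C},\ \Delta_j\in M_{n_j}(\mathbb{C})\}\subseteq M_n(\mathbb{C})$ for some $r,s\in\mathbb{N}_0$ and positive integers $k_i,n_j$ with $\sum_{i=1}^r k_i+\sum_{j=1}^s n_j=n$. The structured singular value $\mu_{\mathbb{B}}:M_n(\mathbb{C})\to[0,\infty)$ is defined by $\mu_{\mathbb{B}}(M)=0$ if $\det(I+M\Delta)\neq0$ for all $\Delta\in\mathbb{B}$, and otherwise $\mu_{\mathbb{B}}(M)=\big(\min\{\|\Delta\|_2\mid \Delta\in\mathbb{B},\ \det(I+M\Delta)=0\}\big)^{-1}$. A $c$-generalized doubly stochastic matrix is a square complex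 matrix all of whose row sums and all of whose column sums equal $c$. *)

(* Defs.v *)
From HB Require Import structures.
From mathcomp Require Import all_boot all_order all_algebra.
From mathcomp Require Import complex.
From mathcomp Require Import boolp classical_sets reals.
Set Implicit Arguments. Unset Strict Implicit. Unset Printing Implicit Defensive.
Import Order.TTheory GRing.Theory Num.Theory.
Local Open Scope ring_scope.
Local Open Scope classical_set_scope.

Section Defs.
Variable R : realType.
Local Notation C := R[i].

Definition cabs (z : C) : R := Num.sqrt (complex.Re z ^+ 2 + complex.Im z ^+ 2).

Definition vnorm n (x : 'cV[C]_n) : R := Num.sqrt (\sum_(i < n) cabs (x i ord0) ^+ 2).

Definition specnorm n (M : 'M[C]_n) : R :=
  sup [set vnorm (M *m x) | x in [set x : 'cV[C]_n | vnorm x = 1]].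

(* A block structure with r repeated-scalar blocks of sizes
   ks = [k_1;..;k_r] followed by s full blocks of sizes ns = [n_1;..;n_s]. The
   b-th block (b counted in ks ++ ns) occupies the indices
   [sumn (take b sz), sumn (take b.+1 sz)). *)
Definition is_block_structure (n : nat) (ks ns : seq nat) : Prop :=
  all (fun k => 0 < k)%N (ks ++ ns) /\ sumn (ks ++ ns) = n.

Definition in_blk (sz : seq nat) (b p : nat) : bool :=
  (sumn (take b sz) <= p < sumn (take b.+1 sz))%N.

(* the set B = { diag(delta_1 I_{k_1},..,delta_r I_{k_r}, Delta_1,..,Delta_s) } *)
Definition block_set n (ks ns : seq nat) : set 'M[C]_n :=
  [set D | (forall i j : 'I_n, D i j != 0 ->
              exists2 b, (b < size (ks ++ ns))%N &
                in_blk (ks ++ ns) b i && in_blk (ks ++ ns) b j)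
         /\ (forall b, (b < size ks)%N -> forall i j : 'I_n,
              in_blk (ks ++ ns) b i -> in_blk (ks ++ ns) b j ->
              D i j = (if i == j then D j j else 0) /\ D i i = D j j)].

Definition ssv n (B : set 'M[C]_n) (M : 'M[C]_n) : R :=
  let S := [set D | B D /\ \det (1%:M + M *m D) = 0] in
  if `[< S !=set0 >] then (inf (@specnorm n @` S))^-1 else 0.

End Defs.

(* Main.v *)
Require Import Defs.
From HB Require Import structures.
From mathcomp Require Import all_boot all_order all_algebra.
From mathcomp Require Import complex.
From mathcomp Require Import boolp classical_sets reals.
From mathcomp Require Import ring lra zify.
Set Implicit Arguments. Unset Strict Implicit. Unset Printing Implicit Defensive.
Import Order.TTheory GRing.Theory Num.Theory.
Local Open Scope ring_scope.
Local Open Scope complex_scope.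

Section Aux.
Variable R : realType.
Local Notation C := R[i].

Lemma cabsE (z : C) : (cabs z)%:C = `|z|.
Proof. by rewrite normc_def. Qed.

Lemma cabs_ge0 (z : C) : 0 <= cabs z.
Proof. exact: sqrtr_ge0. Qed.

Lemma cabsM (z w : C) : cabs (z * w) = cabs z * cabs w.
Proof. by apply: (@complexI R); rewrite rmorphM /= !cabsE normrM. Qed.

Lemma cabsD (z w : C) : cabs (z + w) <= cabs z + cabs w.
Proof. by rewrite -lecR rmorphD /= !cabsE ler_normD. Qed.

Lemma cabs_eq0 (z : C) : (cabs z == 0) = (z == 0).
Proof. by rewrite -[RHS]normr_eq0 -cabsE -(inj_eq (@complexI R)). Qed.

Lemma cabs0 : cabs (0 : C) = 0.
Proof. by apply/eqP; rewrite cabs_eq0. Qed.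

Lemma cabs1 : cabs (1 : C) = 1.
Proof. by apply: (@complexI R); rewrite cabsE normr1. Qed.

Lemma cabsR (r : R) : cabs r%:C = `|r|.
Proof. by rewrite /cabs /= expr0n /= addr0 sqrtr_sqr. Qed.

Lemma cabs2 (z : C) : (cabs z ^+ 2)%:C = z * conjc z.
Proof. by rewrite rmorphXn /= cabsE sqr_normc. Qed.

Lemma cabs_sq (z : C) : cabs z ^+ 2 = complex.Re z ^+ 2 + complex.Im z ^+ 2.
Proof. by rewrite sqr_sqrtr // addr_ge0 // sqr_ge0. Qed.

Lemma cabsV (z : C) : cabs z^-1 = (cabs z)^-1.
Proof. by apply: (@complexI R); rewrite fmorphV /= !cabsE normfV. Qed.


Lemma cabs_sum (I : finType) (f : I -> C) :
  cabs (\sum_i f i) <= \sum_i cabs (f i).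
Proof.
elim/big_rec2: _ => [|i y z _ Hz]; first by rewrite cabs0.
by apply: (le_trans (cabsD _ _)); rewrite lerD2l.
Qed.

Lemma cabs_sq_ge0 (z : C) : 0 <= cabs z ^+ 2.
Proof. exact: sqr_ge0. Qed.

Section V.
Variable n : nat.
Implicit Types x : 'cV[C]_n.

Lemma vnorm_ge0 x : 0 <= vnorm x.
Proof. exact: sqrtr_ge0. Qed.

Lemma sumsq_ge0 x : 0 <= \sum_(i < n) cabs (x i ord0) ^+ 2.
Proof. by apply: sumr_ge0 => i _; exact: sqr_ge0. Qed.

Lemma vnorm_sq x : vnorm x ^+ 2 = \sum_(i < n) cabs (x i ord0) ^+ 2.
Proof. by rewrite sqr_sqrtr // sumsq_ge0. Qed.

Lemma vnormZ a x : vnorm (a *: x) = cabs a * vnorm x.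
Proof.
rewrite /vnorm.
have -> : \sum_(i < n) cabs ((a *: x) i ord0) ^+ 2
        = cabs a ^+ 2 * \sum_(i < n) cabs (x i ord0) ^+ 2.
  by rewrite mulr_sumr; apply: eq_bigr => i _; rewrite mxE cabsM exprMn.
by rewrite sqrtrM ?sqr_ge0 // sqrtr_sqr ger0_norm ?cabs_ge0.
Qed.

Lemma vnorm_eq0 x : vnorm x = 0 -> x = 0.
Proof.
move=> /eqP; rewrite sqrtr_eq0 => H.
have H0 : \sum_(i < n) cabs (x i ord0) ^+ 2 = 0.
  by apply/eqP; rewrite eq_le H sumsq_ge0.
apply/matrixP => i j; rewrite ord1 mxE.
move/psumr_eq0P: H0 => /(_ (fun i _ => cabs_sq_ge0 _) i isT) /eqP.
by rewrite sqrf_eq0 cabs_eq0 => /eqP.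
Qed.

Lemma vnorm0 : vnorm (0 : 'cV[C]_n) = 0.
Proof.
rewrite /vnorm big1 ?sqrtr0 // => i _; by rewrite mxE cabs0 expr0n.
Qed.

Lemma cabs_le_vnorm x i : cabs (x i ord0) <= vnorm x.
Proof.
rewrite -[X in X <= _](ger0_norm (cabs_ge0 (x i ord0))) -sqrtr_sqr /vnorm ler_sqrt ?sumsq_ge0 //.
rewrite (bigD1 i) //= lerDl; apply: sumr_ge0 => j _; exact: sqr_ge0.
Qed.

Lemma sumsq_le (I : finType) (a : I -> R) : (forall i, 0 <= a i) ->
  \sum_i a i ^+ 2 <= (\sum_i a i) ^+ 2.
Proof.
move=> a0; rewrite expr2 mulr_suml; apply: ler_sum => i _.
rewrite expr2 ler_wpM2l //; rewrite (bigD1 i) //= lerDl.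
by apply: sumr_ge0 => j _.
Qed.

Lemma vnorm_le_sum x : vnorm x <= \sum_(i < n) cabs (x i ord0).
Proof.
rewrite -(ger0_norm (sumr_ge0 _ (fun i _ => cabs_ge0 (x i ord0)))).
rewrite -sqrtr_sqr /vnorm ler_sqrt ?sqr_ge0 //.
by apply: sumsq_le => i; exact: cabs_ge0.
Qed.

Lemma vnorm_mul_bound (M : 'M[C]_n) x :
  vnorm (M *m x) <= (\sum_(i < n) \sum_(j < n) cabs (M i j)) * vnorm x.
Proof.
apply: (le_trans (vnorm_le_sum _)); rewrite mulr_suml; apply: ler_sum => i _.
rewrite mxE; apply: (le_trans (cabs_sum _)); rewrite mulr_suml.
apply: ler_sum => j _; rewrite cabsM ler_wpM2l ?cabs_ge0 //.
exact: cabs_le_vnorm.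
Qed.

End V.

Section S.
Variable n : nat.
Hypothesis n0 : (0 < n)%N.
Implicit Types x : 'cV[C]_n.
Local Open Scope classical_set_scope.

Definition e0 : 'cV[C]_n := delta_mx (Ordinal n0) ord0.

Lemma vnorm_e0 : vnorm e0 = 1.
Proof.
rewrite /vnorm (bigD1 (Ordinal n0)) //= big1 ?addr0.
  by rewrite mxE !eqxx /= cabs1 expr1n sqrtr1.
by move=> i /negPf Hi; rewrite mxE Hi /= cabs0 expr0n.
Qed.

Lemma has_sup_spec (M : 'M[C]_n) :
  has_sup [set vnorm (M *m x) | x in [set x : 'cV[C]_n | vnorm x = 1]].
Proof.
split; first by exists (vnorm (M *m e0)); exists e0 => //; exact: vnorm_e0.
exists (\sum_(i < n) \sum_(j < n) cabs (M i j)) => _ [x /= Hx <-].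
by have := vnorm_mul_bound M x; rewrite Hx mulr1.
Qed.

Lemma specnorm_ub (M : 'M[C]_n) x : vnorm x = 1 -> vnorm (M *m x) <= specnorm M.
Proof. by move=> Hx; apply: sup_upper_bound (has_sup_spec M) _ _; exists x. Qed.

Lemma specnorm_le (M : 'M[C]_n) k :
  (forall x, vnorm x = 1 -> vnorm (M *m x) <= k) -> specnorm M <= k.
Proof.
move=> H; apply: ge_sup; first by exists (vnorm (M *m e0)); exists e0 => //; exact: vnorm_e0.
by move=> _ [x /= Hx <-]; apply: H.
Qed.

Lemma specnorm_ge0 (M : 'M[C]_n) : 0 <= specnorm M.
Proof. exact: le_trans (vnorm_ge0 _) (specnorm_ub M vnorm_e0). Qed.

Lemma opnorm (M : 'M[C]_n) x : vnorm (M *m x) <= specnorm M * vnorm x.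
Proof.
have [x0|nx0] := eqVneq (vnorm x) 0.
  by rewrite x0 (vnorm_eq0 x0) mulmx0 vnorm0 mulr0.
have vpos : 0 < vnorm x by rewrite lt_def nx0 vnorm_ge0.
have H := specnorm_ub M (x := ((vnorm x)^-1)%:C *: x) _.
rewrite -scalemxAr !vnormZ cabsR ger0_norm ?invr_ge0 ?vnorm_ge0 // in H.
rewrite -ler_pdivrMr // mulrC; apply: H.
by rewrite mulVf.
Qed.

End S.

Section P2.
Variable n : nat.

Lemma vnorm_sqC (y : 'cV[C]_n) :
  (vnorm y ^+ 2)%:C = \sum_(i < n) y i ord0 * conjc (y i ord0).
Proof.
rewrite vnorm_sq rmorph_sum /=; apply: eq_bigr => i _; exact: cabs2.
Qed.

Lemma expand_sum (al be : C) (b : 'I_n -> C) :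
  \sum_(i < n) (al + be * b i) * conjc (al + be * b i) =
  n%:R * (al * conjc al) + be * conjc al * (\sum_i b i)
  + conjc be * al * (\sum_i conjc (b i))
  + be * conjc be * (\sum_i b i * conjc (b i)).
Proof.
rewrite (eq_bigr (fun i => al * conjc al + be * conjc al * b i
   + conjc be * al * conjc (b i) + be * conjc be * (b i * conjc (b i)))); last first.
  by move=> i _; rewrite rmorphD rmorphM /=; ring.
rewrite !big_split /= -!mulr_sumr sumr_const card_ord -mulr_natl.
by rewrite mulr1 mulr_natl mulrnAr.
Qed.

End P2.

Lemma quad_neg (K t : R) : t = - (`|K| + 1)^-1 -> t * (2 + t * K) < 0.
Proof.
move=> ->; set a := `|K| + 1.
have a0 : 0 < a by rewrite /a ltr_pwDr ?normr_ge0 // ltr01.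
have at1 : a * a^-1 = 1 by rewrite mulfV // gt_eqF.
have hK : K < a by rewrite /a (le_lt_trans (ler_norm K)) // ltrDl ltr01.
have ia0 : 0 < a^-1 by rewrite invr_gt0.
have : 0 < 2 - a^-1 * K.
  have : a^-1 * K < a^-1 * a by rewrite ltr_pM2l.
  rewrite mulVf ?gt_eqF //; lra.
by move=> h; rewrite mulNr oppr_lt0 mulr_gt0 // mulNr -[_ - _]/(2 - a^-1 * K).
Qed.

Section Main.
Variable n : nat.
Hypothesis n0 : (0 < n)%N.
Variable A : 'M[C]_n.
Variable c : C.
Hypothesis hrow : forall i : 'I_n, \sum_(j < n) A i j = c.

Definition ee : 'cV[C]_n := const_mx 1.

Lemma Aee : A *m ee = c *: ee.
Proof.
apply/matrixP => i k; rewrite !mxE -(hrow i) mulr1.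
by apply: eq_bigr => j _; rewrite mxE mulr1.
Qed.

Lemma vnorm_ee : 0 < vnorm ee.
Proof.
rewrite lt_def vnorm_ge0 andbT; apply/eqP => /vnorm_eq0 /matrixP.
move=> /(_ (Ordinal n0) ord0); rewrite !mxE => /eqP; by rewrite oner_eq0.
Qed.

Lemma part1 : cabs c <= specnorm A.
Proof.
have := opnorm n0 A ee; rewrite Aee vnormZ.
by rewrite ler_pM2r // vnorm_ee.
Qed.


Lemma part2 : cabs c = specnorm A -> forall j : 'I_n, \sum_(i < n) A i j = c.
Proof.
move=> hsig j.
set S := \sum_(i < n) A i j.
have [c0|c0] := eqVneq c 0.
  have := opnorm n0 A (delta_mx j 0); rewrite -hsig c0 cabs0 mul0r => h.
  have /vnorm_eq0 h0 : vnorm (A *m delta_mx j 0) = 0.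
    by apply/eqP; rewrite eq_le h vnorm_ge0.
  rewrite /S big1 // => i _; move/matrixP: h0 => /(_ i ord0).
  by rewrite -colE !mxE.
set Q := \sum_(i < n) cabs (A i j) ^+ 2.
set K := cabs c ^+ 2 - Q.
set t := - (`|K| + 1)^-1.
set q := conjc c * (c - S).
set z := t%:C * conjc q.
set x := ee + z *: delta_mx j 0.
have Ax : forall i, (A *m x) i ord0 = c + z * A i j.
  move=> i; rewrite mulmxDr Aee -scalemxAr -colE !mxE mulr1; done.
have xi : forall i, x i ord0 = 1 + z * (i == j)%:R.
  by move=> i; rewrite !mxE eqxx andbT.
have H1 : vnorm (A *m x) ^+ 2 <= cabs c ^+ 2 * vnorm x ^+ 2.
  have h := opnorm n0 A x; rewrite -hsig in h.
  by rewrite -exprMn !expr2 ler_pM ?vnorm_ge0.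
have H2 : \sum_(i < n) (A *m x) i ord0 * conjc ((A *m x) i ord0) <=
   c * conjc c * \sum_(i < n) x i ord0 * conjc (x i ord0).
  by rewrite -!vnorm_sqC -cabs2 -rmorphM lecR.
have E1 : \sum_(i < n) (A *m x) i ord0 * conjc ((A *m x) i ord0) =
   \sum_(i < n) (c + z * A i j) * conjc (c + z * A i j).
  by apply: eq_bigr => i _; rewrite Ax.
have E2 : \sum_(i < n) x i ord0 * conjc (x i ord0) =
   \sum_(i < n) (1 + z * (i == j)%:R) * conjc (1 + z * (i == j)%:R).
  by apply: eq_bigr => i _; rewrite xi.
rewrite E1 E2 !expand_sum in H2.
have F1 : \sum_(i < n) ((i == j)%:R : C) = 1.
  by rewrite (bigD1 j) //= eqxx big1 ?addr0 // => i /negPf ->.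
have F2 : \sum_(i < n) conjc ((i == j)%:R : C) = 1.
  by rewrite (bigD1 j) //= eqxx big1 ?addr0 ?rmorph1 // => i /negPf ->; rewrite rmorph0.
have F3 : \sum_(i < n) ((i == j)%:R : C) * conjc ((i == j)%:R : C) = 1.
  by rewrite (bigD1 j) //= eqxx big1 ?addr0 ?rmorph1 ?mulr1 // => i /negPf ->; rewrite mul0r.
have F4 : \sum_(i < n) conjc (A i j) = conjc S by rewrite rmorph_sum.
have F5 : \sum_(i < n) A i j * conjc (A i j) = (\sum_(i < n) cabs (A i j) ^+ 2)%:C.
  by rewrite rmorph_sum; apply: eq_bigr => i _; rewrite -cabs2.
rewrite F1 F2 F3 F4 F5 -/S rmorph1 in H2.
have hz : z = t%:C * (c * (conjc c - conjc S)).
  by rewrite /z /q rmorphM rmorphB /= conjcK.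
have hzc : conjc z = t%:C * (conjc c * (c - S)).
  have ct : conjc (t%:C) = t%:C by exact: conjc_real.
  by rewrite /z rmorphM /= conjcK oppr0.
have key : c * conjc c * (n%:R * (1 * 1) + z * 1 * 1 + conjc z * 1 * 1 + z * conjc z * 1)
   - (n%:R * (c * conjc c) + z * conjc c * S + conjc z * c * conjc S + z * conjc z * Q%:C)
   = t%:C * (2%:R + t%:C * (c * conjc c - Q%:C)) * (q * conjc q).
  rewrite hzc hz /q rmorphM rmorphB /= conjcK; ring.
have key2 : (t * (2%:R + t * K) * cabs q ^+ 2)%:C = 
   t%:C * (2%:R + t%:C * (c * conjc c - Q%:C)) * (q * conjc q).
  rewrite -!cabs2 /K. rewrite !(rmorphM, rmorphD, rmorphB, rmorph_nat, rmorphXn, rmorph1, rmorphN) /=.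
  done.
rewrite -/Q -subr_ge0 key -key2 ler0c in H2.
have hneg := quad_neg (erefl t).
have hq0 : cabs q ^+ 2 <= 0.
  by rewrite -(nmulr_rge0 _ hneg).
have : q == 0.
  by rewrite -cabs_eq0 -sqrf_eq0 eq_le hq0 sqr_ge0.
rewrite /q mulf_eq0 conjc_eq0 (negPf c0) /= subr_eq0 => /eqP.
by move=> ->.
Qed.


Lemma Apow_bound m x : vnorm (A ^+ m *m x) <= specnorm A ^+ m * vnorm x.
Proof.
elim: m => [|m IH]; first by rewrite expr0 mul1mx mul1r.
rewrite exprS -mulmxE -mulmxA.
apply: (le_trans (opnorm n0 A _)).
by rewrite exprS -mulrA ler_wpM2l ?specnorm_ge0.
Qed.

Lemma Apow_ee m : A ^+ m *m ee = c ^+ m *: ee.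
Proof.
elim: m => [|m IH]; first by rewrite expr0 mul1mx scale1r.
by rewrite exprS -mulmxE -mulmxA IH -scalemxAr Aee scalerA mulrC exprS.
Qed.

Lemma det_lb m (D : 'M[C]_n) : \det (1%:M + A ^+ m *m D) = 0 ->
  1 <= specnorm A ^+ m * specnorm D.
Proof.
move=> /eqP; rewrite -det_tr => /det0P [v vn0 hv].
set x := v^T.
have xn0 : x != 0 by rewrite trmx_eq0.
have hx : x = - (A ^+ m *m (D *m x)).
  have : (1%:M + A ^+ m *m D) *m x = 0.
    by apply: trmx_inj; rewrite trmx_mul trmxK hv trmx0.
  rewrite mulmxDl mul1mx mulmxA => /eqP; rewrite addr_eq0 => /eqP; done.
have vx : 0 < vnorm x.
  rewrite lt_def vnorm_ge0 andbT; apply/eqP => /vnorm_eq0 h; by rewrite h eqxx in xn0.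
have : vnorm x <= specnorm A ^+ m * specnorm D * vnorm x.
  rewrite {1}hx -scaleN1r vnormZ.
  have -> : cabs (-1 : C) = 1 by rewrite -cabs1; apply: (@complexI R); rewrite !cabsE normrN.
  rewrite mul1r -mulrA; apply: (le_trans (Apow_bound _ _)).
  by rewrite ler_wpM2l ?exprn_ge0 ?specnorm_ge0 // opnorm.
by rewrite -{1}[vnorm x]mul1r ler_pM2r.
Qed.

End Main.

Lemma cabsX (z : C) m : cabs (z ^+ m) = cabs z ^+ m.
Proof. by elim: m => [|m IH]; rewrite ?expr0 ?cabs1 // !exprS cabsM IH. Qed.

Lemma cover_blk (sz : seq nat) (p : nat) : (p < sumn sz)%N ->
  exists2 b, (b < size sz)%N & in_blk sz b p.
Proof.
elim: sz p => [|k s IH] p //= hp.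
have [pk|pk] := ltnP p k.
  by exists 0%N => //; rewrite /in_blk /= take0 /= addn0 pk.
have [|b hb hin] := IH (p - k)%N; first lia.
exists b.+1; first by [].
move: hin; rewrite /in_blk /= => /andP [h1 h2]; apply/andP; split; lia.
Qed.

Lemma scalar_in_block n (ks ns : seq nat) (a : C) :
  is_block_structure n ks ns -> block_set ks ns (a%:M : 'M[C]_n).
Proof.
move=> [_ hs]; split.
  move=> i j; rewrite mxE; have [eij|nij] := eqVneq i j; last by rewrite mulr0n eqxx.
  move=> _; rewrite eij.
  have [|b hb hin] := cover_blk (sz := ks ++ ns) (p := j); first by rewrite hs.
  by exists b; rewrite ?hin.
move=> b _ i j _ _; rewrite !mxE !eqxx; split => //; by case: (i == j).
Qed.

Lemma specnorm_scalar n (n0 : (0 < n)%N) (a : C) : specnorm (a%:M : 'M[C]_n) = cabs a.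
Proof.
apply/eqP; rewrite eq_le; apply/andP; split.
  by apply: specnorm_le => // x hx; rewrite mul_scalar_mx vnormZ hx mulr1.
by have := specnorm_ub n0 (a%:M) (vnorm_e0 n0); rewrite mul_scalar_mx vnormZ vnorm_e0 mulr1.
Qed.

End Aux.

Lemma cabsN (R : realType) (z : R[i]) : cabs (- z) = cabs z.
Proof. by apply: (@complexI R); rewrite !cabsE normrN. Qed.

Close Scope complex_scope.
Unset Implicit Arguments.
Set Strict Implicit.

Theorem proposition2p1 (R : realType) (n : nat) (A : 'M[R[i]]_n) (c : R[i]) :
  (0 < n)%N ->
  (forall i : 'I_n, \sum_(j < n) A i j = c) ->
  cabs c <= specnorm A /\
  (cabs c = specnorm A ->
     (forall j : 'I_n, \sum_(i < n) A i j = c) /\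
     (forall (m : nat) (ks ns : seq nat), is_block_structure n ks ns ->
        ssv (block_set ks ns) (A ^+ m) = specnorm A ^+ m)).
Proof.
move=> n0 hrow; split; first exact (part1 n0 hrow).
move=> hsig; split; first exact (part2 n0 hrow hsig).
move=> m ks ns hB.
rewrite /ssv /=.
Local Open Scope classical_set_scope.
set S := [set D | block_set ks ns D /\ \det (1%:M + A ^+ m *m D) = 0].
have pos : 0 < cabs (c ^+ m) -> 0 < specnorm A ^+ m by rewrite cabsX hsig.
have [cm0|cm0] := eqVneq (c ^+ m) 0.
  have sig0 : specnorm A ^+ m = 0 by rewrite -hsig -cabsX cm0 cabs0.
  rewrite asboolF ?sig0 //; move=> [D [_ hD]].
  by have := det_lb n0 hD; rewrite sig0 mul0r ler10.
have cpos : 0 < cabs (c ^+ m) by rewrite lt_def cabs_eq0 cm0 cabs_ge0.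
set D0 : 'M[R[i]]_n := (- (c ^+ m)^-1)%:M.
have hD0 : S D0.
  split; first exact: scalar_in_block.
  apply/eqP; apply/negP => /negP hdet.
  have U : (1%:M + A ^+ m *m D0) \in unitmx by rewrite unitmxE unitfE.
  have h0 : (1%:M + A ^+ m *m D0) *m ee R n = 0.
    rewrite mulmxDl mul1mx -mulmxA mul_scalar_mx -scalemxAr (Apow_ee hrow).
    by rewrite scalerA mulNr mulVf // scaleN1r subrr.
  have := vnorm_ee R n0; rewrite -[ee R n](mulKmx U) h0 mulmx0 vnorm0 ltxx //.
rewrite asboolT; last by exists D0.
have inf_eq : inf [set specnorm x | x in S] = (cabs (c ^+ m))^-1.
  apply/eqP; rewrite eq_le; apply/andP; split.
    have <- : specnorm D0 = (cabs (c ^+ m))^-1 by rewrite specnorm_scalar // cabsN cabsV.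
    apply: ge_inf; last by exists D0.
    by exists 0 => _ [D _ <-]; exact: specnorm_ge0.
  apply: lb_le_inf; first by exists (specnorm D0); exists D0.
  move=> _ [D [_ hD] <-]; have := det_lb n0 hD.
  by move=> h; rewrite -[X in X <= _]mulr1 ler_pdivrMl // cabsX hsig.
by rewrite inf_eq invrK cabsX hsig.
Qed.
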